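(* Let $m\ge 2$, $h\ge 1$ be integers and $q=2^m$. Index the coordinates of vectors in $\mathrm{GF}(2^h)^{q+1}$ by the points of the projective line $\mathrm{PG}(1,q)=\mathrm{GF}(q)\cup\{\infty\}$, and let $\mathrm{PGL}_2(\mathrm{GF}(q))$ act on $\mathrm{GF}(2^h)^{q+1}$ by $\pi:(c_x)_{x\in \mathrm{PG}(1,q)}\mapsto (c_{\pi(x)})_{x\in\mathrm{PG}(1,q)}$. If $\mathcal C$ is a linear code over $\mathrm{GF}(2^h)$ of length $q+1$ that is invariant under this action (i.e. $\pi(\mathbf c)\in\mathcal C$ for all $\mathbf c\in\mathcal C$, $\pi\in\mathrm{PGL}_2(\mathrm{GF}(q))$), then $\mathcal C$ is one of the following: (I) the zero code $\{(0,\dots,0)\}$; (II) the whole space $\mathrm{GF}(2^h)^{q+1}$; (III) the repetition code $\{(c,c,\dots,c): c\in\mathrm{GF}(2^h)\}$; (IV) the code $\{(c_0,\dots,c_q)\in\mathrm{GF}(2^h)^{q+1}: c_0+\cdots+c_q=0\}$.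
   Context: $\mathrm{PGL}_2(\mathrm{GF}(q))$ acts on $\mathrm{PG}(1,q)$ by linear fractional transformations $x\mapsto \frac{ax+b}{cx+d}$ ($ad-bc\neq 0$), with the usual conventions for $\infty$. *)

(* Defs.v *)
From mathcomp Require Import all_boot all_algebra.
Set Implicit Arguments. Unset Strict Implicit. Unset Printing Implicit Defensive.
Import GRing.Theory.
Local Open Scope ring_scope.

(* The projective line PG(1,q) over a field K: [Some x] is x in K, [None] is infinity. *)
Notation PG1 K := (option K).

Definition lft (K : finFieldType) (a b c d : K) (x : PG1 K) : PG1 K :=
  match x with
  | Some t => if c * t + d == 0 then None else Some ((a * t + b) / (c * t + d))
  | None => if c == 0 then None else Some (a / c)
  end.

Notation word K F := {ffun option K -> F}.

Definition act_word (K F : finFieldType) (pi : PG1 K -> PG1 K) (w : word K F)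
  : word K F := [ffun x => w (pi x)].

Definition linear_code (K F : finFieldType) (C : {set word K F}) : Prop :=
  [ffun=> (0 : F)] \in C /\
  (forall (a : F) (u v : word K F), u \in C -> v \in C -> [ffun x => a * u x + v x] \in C).

Definition PGL2_invariant (K F : finFieldType) (C : {set word K F}) : Prop :=
  forall a b c d : K, a * d - b * c != 0 ->
    forall w, w \in C -> act_word (lft a b c d) w \in C.

Definition zero_code (K F : finFieldType) : {set word K F} := [set [ffun=> (0 : F)]].
Definition full_code (K F : finFieldType) : {set word K F} := [set: word K F].
Definition repetition_code (K F : finFieldType) : {set word K F} :=
  [set w : word K F | [exists c : F, w == [ffun=> c]]].
Definition even_weight_code (K F : finFieldType) : {set word K F} :=
  [set w : word K F | \sum_(x : PG1 K) w x == 0].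

(* Main.v *)
Require Import Defs.
From mathcomp Require Import all_boot all_algebra all_field.
Import GRing.Theory.
Local Open Scope ring_scope.

Lemma sum_opt (K : finFieldType) (F : nmodType) (f : option K -> F) :
  \sum_(x : option K) f x = f None + \sum_(t : K) f (Some t).
Proof.
rewrite (bigD1 None) //=; congr (_ + _).
rewrite (reindex (fun t : K => Some t)) /=; first by apply: eq_bigl.
by exists (fun x => odflt 0 x) => [t|[t|]].
Qed.

Section Proof.
Variables (K F : finFieldType) (C : {set word K F}).
Hypothesis hlin : linear_code C.
Hypothesis hinv : PGL2_invariant C.
Hypothesis h2 : 2%:R = 0 :> F.
Hypothesis hK : exists m, (0 < m)%N /\ #|K| = (2 ^ m)%N.

Lemma c0 : [ffun=> (0 : F)] \in C. Proof. by case: hlin. Qed.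

Lemma cscale a {u} : u \in C -> [ffun x => a * u x] \in C.
Proof.
move=> uC; case: hlin => h0 hcl; have := hcl a u _ uC h0.
by congr (_ \in C); apply/ffunP => x; rewrite !ffunE addr0.
Qed.

Lemma cadd {u v} : u \in C -> v \in C -> [ffun x => u x + v x] \in C.
Proof.
move=> uC vC; case: hlin => h0 hcl; have := hcl 1 u v uC vC.
by congr (_ \in C); apply/ffunP => x; rewrite !ffunE mul1r.
Qed.

Lemma csum (I : finType) (f : I -> word K F) :
  (forall i, f i \in C) -> [ffun x => \sum_i f i x] \in C.
Proof.
move=> fC.
have -> : [ffun x => \sum_i f i x] = \sum_i f i.
  by apply/ffunP => x; rewrite ffunE sum_ffunE.
apply: (big_ind (fun g => g \in C)) => //.
- have -> : (0 : word K F) = [ffun=> 0] by apply/ffunP => x; rewrite !ffunE.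
  exact: c0.
- move=> u v uC vC; have := cadd uC vC.
  by congr (_ \in C); apply/ffunP => x; rewrite !ffunE.
Qed.

Definition ind_ne (y : option K) : word K F :=
  [ffun x => if x == y then 0 else 1].

Lemma step_main w x1 x2 : w \in C -> w x1 != w x2 ->
  forall v : word K F, \sum_x v x = 0 -> v \in C.
Proof.
move=> wC hne.
pose sig := \sum_x w x.
have [y hy] : exists y, w y != sig.
  case: (eqVneq (w x1) sig) => [e1|]; last by exists x1.
  by exists x2; rewrite -e1 eq_sym.
have [pi [pidet piN piinj]] : exists pi : option K -> option K,
    [/\ exists a b c d, pi = lft a b c d /\ a * d - b * c != 0,
         pi None = y & injective pi].
  case: (y) => [y0|].
    exists (lft y0 1 1 0); split.
    - by exists y0, 1, 1, 0; rewrite mulr0 mul1r sub0r oppr_eq0 oner_eq0.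
    - by rewrite /= oner_eq0 divr1.
    have eS : forall t, lft y0 1 1 0 (Some t) =
        if t == 0 then None else Some (y0 + t^-1).
      move=> t /=; rewrite mul1r addr0; case: eqP => // /eqP t0.
      by rewrite mulrDl mulfK // div1r.
    move=> [t|] [u|]; rewrite ?eS /= ?oner_eq0 ?divr1 //.
    - case: (t =P 0) => [->|t0]; case: (u =P 0) => [->|u0] //; try by move=> [].
      by move=> [/addrI/invr_inj ->].
    - case: (t =P 0) => [->|t0]; first by move=> [].
      by move=> [] /eqP; rewrite -subr_eq0 addrC addKr invr_eq0 => /eqP/t0.
    - case: (u =P 0) => [->|u0]; first by move=> [].
      by move=> [] /esym/eqP; rewrite -subr_eq0 addrC addKr invr_eq0 => /eqP/u0.
  exists (lft 1 0 0 1); split.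
  - by exists 1, 0, 0, 1; rewrite mulr0 mul1r subr0 oner_eq0.
  - by rewrite /= eqxx.
  move=> [t|] [u|] /=; rewrite ?eqxx ?mul0r ?add0r ?oner_eq0 ?mul1r ?addr0 ?divr1 //.
pose w' := act_word pi w.
have w'C : w' \in C by case: pidet => a [b [c [d [e hd]]]]; rewrite /w' e; exact: hinv.
pose s := \sum_(t : K) w' (Some t).
have hs : s != 0.
  have : \sum_x w' x = sig.
    by rewrite /sig [RHS](reindex_inj piinj); apply: eq_bigr => x _; rewrite ffunE.
  rewrite sum_opt -/s ffunE piN => e; apply/eqP => s0; move: hy.
  by rewrite -e s0 addr0 eqxx.
pose S := [ffun x => \sum_(t : K) act_word (lft 1 t 0 1) w' x].
have SC : S \in C.
  apply: csum => t; apply: hinv => //.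
  by rewrite mulr0 subr0 mul1r oner_eq0.
have hS : S = [ffun x => s * ind_ne None x].
  apply/ffunP => [[x|]]; rewrite !ffunE /=.
    under eq_bigr do rewrite ffunE /= mul0r add0r oner_eq0 mul1r divr1.
    by rewrite mulr1 /s [RHS](reindex_inj (addrI x)).
  rewrite mulr0.
  under eq_bigr do rewrite ffunE /= eqxx.
  rewrite sumr_const -mulr_natr; case: hK => m [m0 ->].
  by rewrite natrX h2 expr0n eqn0Ngt m0 mulr0.
have hN : ind_ne None \in C.
  have := cscale s^-1 SC; congr (_ \in C).
  by apply/ffunP => x; rewrite hS !ffunE mulrA mulVf // mul1r.
have hall : forall y, ind_ne y \in C.
  case=> [y0|] //.
  have := @hinv 0 1 1 (- y0).
  rewrite mul0r mulr1 sub0r oppr_eq0 oner_eq0 => /(_ isT _ hN).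
  congr (_ \in C); apply/ffunP => [[t|]]; rewrite !ffunE /= ?oner_eq0 //.
  rewrite mul1r subr_eq0; case: (t =P y0) => [->|tn] /=; first by rewrite eqxx.
  by case: eqP => // -[/tn].
move=> v v0.
have := @csum _ (fun y => [ffun x => - v y * ind_ne y x]) (fun y => cscale (- v y) (hall y)).
congr (_ \in C); apply/ffunP => x; rewrite ffunE.
under eq_bigr do rewrite ffunE.
rewrite (bigD1 x) //= ffunE eqxx mulr0 add0r.
move: v0; rewrite (bigD1 x) //= => /eqP; rewrite addr_eq0 => /eqP ->.
rewrite -sumrN; apply: eq_bigr => z zx; rewrite ffunE eq_sym (negbTE zx).
by rewrite mulr1.
Qed.

End Proof.

Theorem theorem11 (m h : nat) (K F : finFieldType) :
  (2 <= m)%N -> (1 <= h)%N -> #|K| = (2 ^ m)%N -> #|F| = (2 ^ h)%N ->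
  forall C : {set word K F},
    linear_code C -> PGL2_invariant C ->
    [\/ C = zero_code K F, C = full_code K F, C = repetition_code K F
      | C = even_weight_code K F].
Proof.
move=> hm hh cK cF C hlin hinv.
have h2 : 2%:R = 0 :> F.
  by apply: pcharf0; apply: (card_finPcharP cF).
have hK : exists m, (0 < m)%N /\ #|K| = (2 ^ m)%N.
  by exists m; split => //; apply: leq_trans hm.
have hcl := hlin.2.
case: (boolP [exists w in C, [exists x1, [exists x2, w x1 != w x2]]]).
  move=> /existsP [w /andP [wC /existsP [x1 /existsP [x2 hne]]]].
  have E := @step_main K F C hlin hinv h2 hK w x1 x2 wC hne.
  case: (boolP [forall w in C, \sum_x w x == 0]).
    move=> /forall_inP hall; apply: Or44; apply/setP => v; rewrite inE.
    by apply/idP/idP => [/hall|/eqP/E].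
  rewrite negb_forall_in => /existsP [u /andP [uC hu]].
  apply: Or42; apply/setP => v; rewrite inE.
  pose k := (\sum_x v x) / (\sum_x u x).
  have := hcl k u [ffun x => v x - k * u x] uC.
  have -> : [ffun x => k * u x + [ffun x => v x - k * u x] x] = v.
    by apply/ffunP => x; rewrite !ffunE addrC subrK.
  apply; apply: E.
  under eq_bigr do rewrite ffunE.
  by rewrite sumrB -mulr_sumr /k divfK // subrr.
rewrite negb_exists_in => /forall_inP hc.
have const : forall w, w \in C -> w = [ffun=> w None].
  move=> w wC; apply/ffunP => x; rewrite ffunE; apply/eqP.
  move: (hc w wC); rewrite negb_exists => /forallP /(_ x).
  by rewrite negb_exists => /forallP /(_ None); rewrite negbK.
case: (boolP [forall w in C, w == [ffun=> 0]]).
  move=> /forall_inP hall; apply: Or41; apply/setP => v; rewrite /zero_code inE.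
  by apply/idP/idP => [/hall //| /eqP ->]; case: hlin.
rewrite negb_forall_in => /existsP [u /andP [uC hu]].
have ux : forall x, u x = u None by move=> x; rewrite {1}(const u uC) ffunE.
have c0 : u None != 0.
  apply: contraNneq hu => e; apply/eqP/ffunP => x; by rewrite ux e ffunE.
apply: Or43; apply/setP => v; rewrite inE; apply/idP/existsP => [vC|[d /eqP ->]].
  by exists (v None); apply/eqP; exact: const.
have := hcl (d / u None) u [ffun=> 0] uC (hlin.1).
congr (_ \in C); apply/ffunP => x; by rewrite !ffunE ux divfK // addr0.
Qed.
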